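(* For every $C>0$, the optimal solution $w^*_C$ lies in the closed Euclidean ball $$\Big\| w^*_C - \tfrac12\Big(\hat w - \tfrac{C}{\tilde C}(g-\hat w)\Big)\Big\|^2 \le \Big(\tfrac12\Big\|\hat w + \tfrac{C}{\tilde C}(g-\hat w)\Big\|\Big)^2 .$$
   Context: Let $\{(x_i,y_i)\}_{i=1}^n\subset\mathbb R^d\times\{-1,1\}$ be a training set. Let $\ell:\{-1,1\}\times\mathbb R\to\mathbb R$ be convex in its second argument, and set $\ell_i(w):=\ell(y_i,w^\top x_i)$ for $w\in\mathbb R^d$ (a convex function on $\mathbb R^d$). For $C>0$ let $w^*_C$ be the (unique) minimizer over $w\in\mathbb R^d$ of $P_C(w)=\frac12\|w\|^2+C\sum_{i=1}^n\ell_i(w)$, where $\|\cdot\|$ is the Euclidean norm. Fix $\tilde C>0$ and an arbitrary vector $\hat w\in\mathbb R^d$ (an approximate solution for $\tilde C$); for each $i$ let $\xi_i\in\partial\ell_i(\hat w)$ be any subgradient of $\ell_i$ at $\hat w$, and set $g:=\hat w+\tilde C\sum_{i=1}^n\xi_i$ (a subgradient of $P_{\tilde C}$ at $\hat w$). *)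

(* Defs.v *)
From HB Require Import structures.
From mathcomp Require Import all_boot all_order all_algebra.
Set Implicit Arguments. Unset Strict Implicit. Unset Printing Implicit Defensive.
Import Order.TTheory GRing.Theory Num.Theory.
Local Open Scope ring_scope.

Definition dotv (R : rcfType) (d : nat) (u v : 'rV[R]_d) : R :=
  \sum_(k < d) u 0 k * v 0 k.

Definition normv (R : rcfType) (d : nat) (u : 'rV[R]_d) : R :=
  Num.sqrt (dotv u u).

Definition convex_fun (R : rcfType) (f : R -> R) : Prop :=
  forall a b t : R, 0 <= t -> t <= 1 ->
    f (t * a + (1 - t) * b) <= t * f a + (1 - t) * f b.

Definition is_subgradient (R : rcfType) (d : nat) (f : 'rV[R]_d -> R)
  (w xi : 'rV[R]_d) : Prop :=
  forall v : 'rV[R]_d, f w + dotv xi (v - w) <= f v.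

Definition loss_i (R : rcfType) (d n : nat) (ell : R -> R -> R)
  (x : 'I_n -> 'rV[R]_d) (y : 'I_n -> R) (i : 'I_n) (w : 'rV[R]_d) : R :=
  ell (y i) (dotv w (x i)).

Definition primal (R : rcfType) (d n : nat) (ell : R -> R -> R)
  (x : 'I_n -> 'rV[R]_d) (y : 'I_n -> R) (C : R) (w : 'rV[R]_d) : R :=
  2^-1 * normv w ^+ 2 + C * \sum_(i < n) loss_i ell x y i w.

(* Main.v *)
Require Import Defs.
From HB Require Import structures.
From mathcomp Require Import all_boot all_order all_algebra.
From mathcomp Require Import ring lra.
Import Order.TTheory GRing.Theory Num.Theory.
Local Open Scope ring_scope.
Section S.
Context {R : rcfType} {d : nat}.
Implicit Types u v w : 'rV[R]_d.
Lemma dotvC u v : dotv u v = dotv v u.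
Proof. by apply: eq_bigr => k _; rewrite mulrC. Qed.
Lemma dotvDl u v w : dotv (u + v) w = dotv u w + dotv v w.
Proof. by rewrite /dotv -big_split; apply: eq_bigr => k _; rewrite mxE mulrDl. Qed.
Lemma dotvZl a u v : dotv (a *: u) v = a * dotv u v.
Proof. by rewrite /dotv mulr_sumr; apply: eq_bigr => k _; rewrite mxE mulrA. Qed.
Lemma dotvNl u v : dotv (- u) v = - dotv u v.
Proof. by rewrite -scaleN1r dotvZl mulN1r. Qed.
Lemma dotvBl u v w : dotv (u - v) w = dotv u w - dotv v w.
Proof. by rewrite dotvDl dotvNl. Qed.
Lemma dotvDr u v w : dotv w (u + v) = dotv w u + dotv w v.
Proof. by rewrite dotvC dotvDl !(dotvC w). Qed.
Lemma dotvZr a u v : dotv v (a *: u) = a * dotv v u.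
Proof. by rewrite dotvC dotvZl dotvC. Qed.
Lemma dotvNr u v : dotv v (- u) = - dotv v u.
Proof. by rewrite dotvC dotvNl dotvC. Qed.
Lemma dotvBr u v w : dotv w (u - v) = dotv w u - dotv w v.
Proof. by rewrite dotvDr dotvNr. Qed.
Lemma dotv0l v : dotv 0 v = 0.
Proof. by rewrite -(scale0r 0) dotvZl mul0r. Qed.
Lemma dotv_suml n (f : 'I_n -> 'rV[R]_d) v :
  dotv (\sum_(i < n) f i) v = \sum_(i < n) dotv (f i) v.
Proof. exact: (big_morph (fun u => dotv u v) (fun a b => dotvDl a b v) (dotv0l v)). Qed.
Lemma dotv_ge0 u : 0 <= dotv u u.
Proof. by apply: sumr_ge0 => k _; rewrite -expr2 sqr_ge0. Qed.
Lemma normv2 u : normv u ^+ 2 = dotv u u.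
Proof. by rewrite /normv sqr_sqrtr // dotv_ge0. Qed.
End S.

Theorem mainTheorem1 (R : rcfType) (d n : nat)
  (x : 'I_n -> 'rV[R]_d) (y : 'I_n -> R)
  (hy : forall i, y i = 1 \/ y i = -1)
  (ell : R -> R -> R)
  (hconv : forall s : R, s = 1 \/ s = -1 -> convex_fun (ell s))
  (Ct : R) (hCt : 0 < Ct)
  (what : 'rV[R]_d) (xi : 'I_n -> 'rV[R]_d)
  (hxi : forall i, is_subgradient (loss_i ell x y i) what (xi i))
  (C : R) (hC : 0 < C)
  (wstar : 'rV[R]_d)
  (hmin : forall w : 'rV[R]_d, primal ell x y C wstar <= primal ell x y C w) :
  let g := what + Ct *: \sum_(i < n) xi i in
  normv (wstar - 2^-1 *: (what - (C / Ct) *: (g - what))) ^+ 2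
    <= (2^-1 * normv (what + (C / Ct) *: (g - what))) ^+ 2.
Proof.
cbv zeta; set g := what + Ct *: _.
set s := \sum_(i < n) xi i.
have hgs : (C / Ct) *: (g - what) = C *: s.
  by rewrite /g addrC addKr scalerA mulrVK // unitfE gt_eqF.
rewrite hgs exprMn !normv2.
set L := fun w => \sum_(i < n) loss_i ell x y i w.
have hsub : L what + dotv s (wstar - what) <= L wstar.
  rewrite /L /s dotv_suml -big_split /=; apply: ler_sum => i _; exact: hxi.
(* optimality along segment *)
have hseg : forall t, 0 < t -> t <= 1 ->
    C * (L wstar - L what) <= dotv wstar (what - wstar) + t / 2 * dotv (what - wstar) (what - wstar).
  move=> t t0 t1.
  have hL : L (wstar + t *: (what - wstar)) <= t * L what + (1 - t) * L wstar.
    rewrite /L !mulr_sumr -big_split /=; apply: ler_sum => i _.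
    rewrite /loss_i.
    have -> : dotv (wstar + t *: (what - wstar)) (x i)
        = t * dotv what (x i) + (1 - t) * dotv wstar (x i).
      rewrite dotvDl dotvZl dotvBl; ring.
    by apply: hconv; [exact: hy | exact: ltW | exact: t1].
  have := hmin (wstar + t *: (what - wstar)).
  rewrite /primal !normv2 -/(L _) -/(L _).
  move=> hm; rewrite !(dotvDl, dotvDr, dotvZl, dotvZr) in hm.
  have hm2 : t * (C * (L wstar - L what)) <=
      t * (dotv wstar (what - wstar) + t / 2 * dotv (what - wstar) (what - wstar)).
    have hCL : C * L (wstar + t *: (what - wstar)) <= C * (t * L what + (1 - t) * L wstar)
      by rewrite ler_pM2l.
    rewrite !(dotvBl, dotvBr, dotvNl, dotvNr) in hm *.
    rewrite !(dotvC what wstar) in hm *.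
    set a := dotv wstar wstar in hm *; set b := dotv wstar what in hm *; set c := dotv what what in hm *.
    set L1 := L wstar in hm hCL *; set L2 := L what in hm hCL *.
    set L3 := L _ in hm hCL.
    have e : t / 2 = 2^-1 * t by rewrite mulrC.
    rewrite e. nra.
  by move: hm2; rewrite ler_pM2l.
set A := C * (L wstar - L what).
set B := dotv wstar (what - wstar).
set K := dotv (what - wstar) (what - wstar).
have K0 : 0 <= K by exact: dotv_ge0.
have hAB : A <= B.
  move: hseg; rewrite -/A -/B -/K => hseg.
  rewrite leNgt; apply/negP => hlt.
  have hK1 : 0 < K + 1 by lra.
  have hAB0 : 0 < A - B by lra.
  case: (lerP ((A - B) / (K + 1)) 1) => ht.
  - have := hseg ((A - B) / (K + 1)) (divr_gt0 hAB0 hK1) ht.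
    have : (A - B) / (K + 1) / 2 * K < A - B.
      rewrite -mulrA (mulrC 2^-1) -mulrA mulrA.
      have : (A - B) / (K + 1) * K < A - B.
        rewrite mulrAC ltr_pdivrMr //; nra.
      have : 0 <= (A - B) / (K + 1) * K by apply: mulr_ge0 => //; apply: divr_ge0; lra.
      lra.
    move: ((A - B) / (K + 1) / 2 * K) => T. lra.
  - have := hseg 1 ltr01 (lexx _).
    have : K < A - B.
      move: ht; rewrite ltr_pdivlMr //; nra.
    lra.
have key : C * dotv s (wstar - what) <= B.
  have : C * (L what + dotv s (wstar - what)) <= C * L wstar by rewrite ler_pM2l.
  rewrite /A in hAB; lra.
rewrite /B in key.
rewrite !(dotvDl, dotvDr, dotvZl, dotvZr, dotvBl, dotvBr, dotvNl, dotvNr) in key *.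
rewrite ?(dotvC s wstar) ?(dotvC s what) ?(dotvC what wstar) ?(dotvC s wstar) in key *.
move: key.
move: (dotv wstar wstar) (dotv wstar what) (dotv wstar s) (dotv what what) (dotv what s) (dotv s s) => a b c e f h key.
have -> : (2^-1 : R) ^+ 2 = 2^-1 * 2^-1 by rewrite expr2.
rewrite -subr_ge0; rewrite -subr_ge0 in key.
suff -> : (2^-1 * 2^-1 * (e + C * f + (C * f + C * (C * h))) - (a - 2^-1 * (b - C * c) + (- (2^-1 * (b - C * c)) - 2^-1 * (- (2^-1 * (e - C * f)) - C * - (2^-1 * (f - C * h)))))) = b - a - C * (c - f) by [].
field. by [].
Qed.
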